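(* Suppose that $G$ is a finite solvable group acted on by automorphisms by an elementary abelian $p$-group $A$ with $|A|\geq p^3$. If this action is good and $C_G(a)$ is abelian for every nonidentity $a\in A$, then $G$ is abelian.
   Context: If a group $A$ acts on a group $G$ by automorphisms, the action is called good if $H=[H,B]C_H(B)$ for every subgroup $B\le A$ and every $B$-invariant subgroup $H\le G$. *)

(* Defs.v *)
From mathcomp Require Import all_boot all_fingroup all_solvable.
Set Implicit Arguments. Unset Strict Implicit. Unset Printing Implicit Defensive.
Import GroupScope.

Section GoodAction.
Variables (aT gT : finGroupType) (A : {group aT}) (G : {group gT}).
Variable to : groupAction A G.

Definition actcomm (H : {set gT}) (B : {set aT}) : {set gT} :=
  <<[set x^-1 * to x b | x in H, b in B]>>.

Definition good_action : Prop :=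
  forall (B : {group aT}) (H : {group gT}),
    B \subset A -> H \subset G -> [acts B, on H | to] ->
    H :=: actcomm H B * 'C_(H | to)(B).
End GoodAction.

(* Main.v *)
Require Import Defs.
From mathcomp Require Import all_boot all_fingroup all_solvable ssralg.
Set Implicit Arguments. Unset Strict Implicit. Unset Printing Implicit Defensive.
Import GroupScope GRing.Theory.


Lemma gacent1_mem (aT gT : finGroupType) (A : {group aT}) (G : {group gT})
  (to : groupAction A G) (K : {set gT}) a x :
  a \in A -> K \subset G -> (x \in 'C_(K | to)[a]) = (x \in K) && (to x a == x).
Proof.
move=> Aa sKG; rewrite inE gacent1E // !inE.
case Kx: (x \in K); rewrite //= (subsetP sKG) //=.
by rewrite sub1set inE.
Qed.

Lemma acts_by (aT : finGroupType) (D : {set aT}) (rT : finType)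
  (to : action D rT) (B : {set aT}) (S : {set rT}) :
  B \subset D -> (forall b y, b \in B -> y \in S -> to y b \in S) ->
  [acts B, on S | to].
Proof.
move=> sBD h; apply/subsetP => b Bb; rewrite inE; apply/andP; split.
  exact: (subsetP sBD).
by rewrite inE; apply/subsetP => y Sy; rewrite inE; apply: h.
Qed.

Lemma der1_acts (aT gT : finGroupType) (A : {group aT}) (G : {group gT})
  (to : groupAction A G) (B : {group aT}) (K : {group gT}) :
  B \subset A -> K \subset G -> [acts B, on K | to] -> [acts B, on K^`(1) | to].
Proof.
move=> sBA sKG actsK; rewrite derg1 /commutator; apply: acts_gen.
  apply/subsetP => w /imset2P[x y Kx Ky ->].
  by rewrite groupR // (subsetP sKG).
apply: acts_by => // b w Bb /imset2P[x y Kx Ky ->].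
have Ab := subsetP sBA b Bb.
rewrite gactR ?(subsetP sKG) //.
by apply: imset2_f; rewrite (acts_act actsK Bb).
Qed.

Lemma cent_acts (aT gT : finGroupType) (A : {group aT}) (G : {group gT})
  (to : groupAction A G) (B : {group aT}) (K : {group gT}) e :
  abelian A -> B \subset A -> K \subset G -> [acts B, on K | to] -> e \in A ->
  [acts B, on 'C_(K | to)[e] | to].
Proof.
move=> abA sBA sKG actsK Ae.
apply: acts_by => // b y Bb; have Ab := subsetP sBA b Bb.
rewrite !gacent1_mem //.
case/andP=> Ky /eqP fy; rewrite (acts_act actsK Bb) Ky /=.
by rewrite -actMin // (centsP abA b Ab e Ae) actMin // fy.
Qed.

Lemma bigcup_acts (aT gT : finGroupType) (A : {group aT}) (G : {group gT})
  (to : groupAction A G) (B E : {group aT}) (K : {group gT}) :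
  abelian A -> B \subset A -> E \subset A -> K \subset G -> [acts B, on K | to] ->
  [acts B, on \bigcup_(e in E^#) 'C_(K | to)[e] | to].
Proof.
move=> abA sBA sEA sKG actsK.
apply: acts_by => // b y Bb /bigcupP[e Ee Cy].
have Ae : e \in A by apply: (subsetP sEA); move: Ee; rewrite !inE => /andP[].
apply/bigcupP; exists e => //.
by rewrite (acts_act (cent_acts abA sBA sKG actsK Ae) Bb).
Qed.

Lemma setact_rcoset (aT gT : finGroupType) (A : {group aT}) (G : {group gT})
  (to : groupAction A G) (L : {group gT}) b x :
  b \in A -> L \subset G -> b \in 'N(L | to) -> x \in G ->
  (to^*)%act (L :* x) b = L :* to x b.
Proof.
move=> Ab sLG nLb Gx; apply/eqP; rewrite eqEcard card_setact !card_rcoset leqnn andbT.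
apply/subsetP => z /imsetP[w /rcosetP[l Ll ->] ->].
rewrite gactM ?(subsetP sLG l Ll) //.
by apply/rcosetP; exists (to l b) => //; rewrite (astabs_act _ nLb).
Qed.
Lemma F1 (aT gT : finGroupType) (A : {group aT}) (G : {group gT})
  (to : groupAction A G) (B : {group aT}) (H N : {group gT}) x :
  good_action to -> abelian A -> B \subset A -> H \subset G ->
  [acts B, on H | to] -> N \subset H -> H \subset 'N(N) ->
  [acts B, on N | to] -> x \in H ->
  (forall b, b \in B -> x^-1 * to x b \in N) ->
  x \in N * 'C_(H | to)(B).
Proof.
move=> good abA sBA sHG actsH sNH nNH actsN Hx cx.
pose S := [set y in H | [forall b in B, y^-1 * to y b \in N]].
have gS : group_set S.
  apply/group_setP; split.
    rewrite inE group1; apply/forallP => b; apply/implyP => Bb.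
    by rewrite gact1 ?(subsetP sBA) // invg1 mul1g group1.
  move=> y z; rewrite !inE => /andP[Hy /forallP cy] /andP[Hz /forallP cz].
  rewrite groupM //=; apply/forallP=> b; apply/implyP=> Bb.
  have Ab := subsetP sBA b Bb.
  have Gy := subsetP sHG y Hy; have Gz := subsetP sHG z Hz.
  rewrite gactM // invMg.
  have ny := implyP (cy b) Bb; have nz := implyP (cz b) Bb.
  have -> : z^-1 * y^-1 * (to y b * to z b) = (y^-1 * to y b) ^ z * (z^-1 * to z b).
    by rewrite conjgE !mulgA mulgK.
  by rewrite groupM // memJ_norm // (subsetP nNH).
pose SG := Group gS.
have sSH : S \subset H by apply/subsetP => y; rewrite inE => /andP[].
have actsS : [acts B, on S | to].
  apply/subsetP => b Bb; have Ab := subsetP sBA b Bb.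
  rewrite !inE Ab; apply/subsetP => y; rewrite !inE => /andP[Hy /forallP cy].
  rewrite (acts_act actsH Bb) Hy /=.
  apply/forallP => c; apply/implyP => Bc; have Ac := subsetP sBA c Bc.
  have Gy := subsetP sHG y Hy.
  have Gyc : to y c \in G by rewrite gact_stable.
  rewrite -actMin // (centsP abA b Ab c Ac) actMin // -gactV // -gactM ?groupV //.
  by rewrite (acts_act actsN Bb) (implyP (cy c) Bc).
have defS := good B SG sBA (subset_trans sSH sHG) actsS.
have Sx : x \in SG.
  rewrite inE Hx; apply/forallP => b; apply/implyP => Bb; exact: cx.
rewrite defS in Sx; apply: (subsetP _ _ Sx); apply: mulgSS; last exact: setSI.
rewrite /actcomm gen_subG; apply/subsetP => w /imset2P[y b Sy Bb ->].
by move: Sy; rewrite inE => /andP[_ /forallP /(_ b)]; rewrite Bb.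
Qed.

Lemma F1e (aT gT : finGroupType) (A : {group aT}) (G : {group gT})
  (to : groupAction A G) (e : aT) (H N : {group gT}) x :
  good_action to -> abelian A -> e \in A -> H \subset G ->
  [acts <[e]>, on H | to] -> N \subset H -> H \subset 'N(N) ->
  [acts <[e]>, on N | to] -> x \in H ->
  x^-1 * to x e \in N ->
  x \in N * 'C_(H | to)[e].
Proof.
move=> good abA Ae sHG actsH sNH nNH actsN Hx cx.
have ee : e \in <[e]> := cycle_id e.
rewrite -gacent_cycle //; apply: F1 => //; first by rewrite cycle_subG.
move=> b /cycleP[n ->].
suff: [/\ to x (e ^+ n) \in H, (to x (e ^+ n))^-1 * to (to x (e ^+ n)) e \in N
        & x^-1 * to x (e ^+ n) \in N] by case.
elim: n => [|n [Hz cz xz]].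
  by rewrite expg0 act1 mulVg group1.
have Gz := subsetP sHG _ Hz.
rewrite expgSr actMin ?groupX //; set z := to x (e ^+ n).
have Hz' : to z e \in H by rewrite (acts_act actsH ee).
have Gz' := subsetP sHG _ Hz'.
split => //.
  by rewrite -gactV // -gactM ?groupV // (acts_act actsN ee).
have -> : x^-1 * to z e = (x^-1 * z) * (z^-1 * to z e) by rewrite !mulgA mulgK.
by rewrite groupM.
Qed.

Lemma gen_cent (aT gT : finGroupType) (A : {group aT}) (G : {group gT})
  (to : groupAction A G) p (E : {group aT}) :
  good_action to -> abelian A -> prime p -> p.-abelem E -> #|E| = (p ^ 2)%N ->
  E \subset A ->
  forall K : {group gT}, K \subset G -> [acts E, on K | to] -> solvable K ->
  K \subset <<\bigcup_(e in E^#) 'C_(K | to)[e]>>.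
Proof.
move=> good abA pr_p abE oE sEA K.
have [n leKn] := ubnP #|K|; elim: n K leKn => // n IHn K leKn sKG actsK solK.
case: (eqsVneq K 1) => [-> | ntK]; first exact: sub1G.
have pE : p.-group E := abelem_pgroup abE.
have EA : forall e, e \in E -> e \in A := subsetP sEA.
set L := <<\bigcup_(e in E^#) 'C_(K | to)[e]>>.
have sK'K : K^`(1) \proper K := sol_der1_proper solK (subxx K) ntK.
have sK'L : K^`(1) \subset L.
  apply: subset_trans (IHn _ _ _ _ _) _.
  - by apply: leq_trans (proper_card sK'K) _; rewrite -ltnS.
  - exact: subset_trans (der_sub 1 K) sKG.
  - exact: der1_acts.
  - exact: solvableS (der_sub 1 K) solK.
  apply: genS; apply/bigcupsP => e Ee; apply: subset_trans (bigcup_sup e Ee).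
  exact: setSI (der_sub 1 K).
have sLK : L \subset K.
  by rewrite gen_subG; apply/bigcupsP => e _; apply: subsetIl.
have nsLK : L <| K := sub_der1_normal sK'L sLK.
have nLK := normal_norm nsLK.
have sLG := subset_trans sLK sKG.
have actsL : [acts E, on L | to].
  apply: acts_gen; last exact: bigcup_acts.
  by apply/bigcupsP => e _; exact: subset_trans (subsetIl _ _) sKG.
have sCL : forall e, e \in E^# -> 'C_(K | to)[e] \subset L.
  by move=> e Ee; apply: subset_trans (bigcup_sup e Ee) (subset_gen _).
have fixL : forall e y, e \in E^# -> y \in K -> y^-1 * to y e \in L -> y \in L.
  move=> e y Ee Ky cy; have Ee' : e \in E by move: Ee; rewrite !inE => /andP[].
  have sEe : <[e]> \subset E by rewrite cycle_subG.
  have := F1e good abA (EA e Ee') sKG (subset_trans sEe actsK) sLK nLK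
    (subset_trans sEe actsL) Ky cy.
  by apply: subsetP; apply: subset_trans (mulgSS (subxx L) (sCL e Ee)) _; rewrite mulGid.
have abKL : abelian (K / L) := sub_der1_abelian sK'L.
pose phi g := FiniteModule.fmod abKL (coset L g).
have KLin : forall g, g \in K -> coset L g \in K / L by move=> g Kg; apply: mem_quotient.
have phiM : {in K &, forall g h, phi (g * h) = (phi g + phi h)%R}.
  move=> g h Kg Kh; rewrite /phi morphM ?(subsetP nLK) //.
  by rewrite FiniteModule.fmodM ?KLin.
have phi1 : phi 1 = 0%R by rewrite /phi morph1 FiniteModule.fmod1.
have phi0 : forall g, g \in K -> (phi g == 0)%R = (g \in L).
  move=> g Kg; apply/eqP/idP => [h | Lg]; last first.
    by rewrite /phi coset_id // FiniteModule.fmod1.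
  apply: coset_idr; first exact: (subsetP nLK).
  by rewrite -(FiniteModule.fmodK abKL (KLin g Kg)) -/(phi g) h.
have phi_prod : forall (I : finType) (P : pred I) (F : I -> gT),
    (forall i, P i -> F i \in K) ->
    phi (\prod_(i | P i) F i) = (\sum_(i | P i) phi (F i))%R.
  move=> I P F KF.
  suff [] : \prod_(i | P i) F i \in K /\ phi (\prod_(i | P i) F i) = (\sum_(i | P i) phi (F i))%R by [].
  apply: (big_rec2 (fun g u => g \in K /\ phi g = u)); first by rewrite group1 phi1.
  move=> i g u Pi [Kg <-]; split; first by rewrite groupM ?KF.
  by rewrite phiM ?KF.
have act_prod : forall (I : finType) (P : pred I) (F : I -> gT) e, e \in A ->
    (forall i, P i -> F i \in G) ->
    to (\prod_(i | P i) F i) e = \prod_(i | P i) to (F i) e.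
  move=> I P F e Ae GF.
  suff [] : \prod_(i | P i) F i \in G /\ to (\prod_(i | P i) F i) e = \prod_(i | P i) to (F i) e by [].
  apply: (big_rec2 (fun g h => g \in G /\ to g e = h)); first by rewrite group1 gact1.
  move=> i g h Pi [Gg <-]; split; first by rewrite groupM ?GF.
  by rewrite gactM ?GF.
have Zsum : forall D : {group aT}, D \subset E -> D :!=: 1 -> forall x, x \in K ->
    (\sum_(d in D) phi (to x d) = 0)%R.
  move=> D sDE ntD x Kx.
  have [e De ne1] := trivgPn _ ntD.
  have Ee : e \in E^# by rewrite !inE ne1 (subsetP sDE).
  have Ae := EA e (subsetP sDE e De).
  have KF : forall d, d \in D -> to x d \in K.
    by move=> d Dd; rewrite (acts_act actsK (subsetP sDE d Dd)).
  pose y := \prod_(d in D) to x d.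
  have Ky : y \in K by apply: group_prod.
  have Kye : to y e \in K by rewrite (acts_act actsK (subsetP sDE e De)).
  have eq1 : phi (to y e) = phi y.
    rewrite /y act_prod //; last by move=> d Dd; rewrite (subsetP sKG) ?KF.
    rewrite phi_prod; last by move=> d Dd; rewrite (acts_act actsK (subsetP sDE e De)) KF.
    rewrite phi_prod //.
    transitivity (\sum_(d in D) phi (to x (d * e)%g))%R.
      by apply: eq_bigr => d Dd; rewrite actMin // EA // (subsetP sDE).
    rewrite [RHS](reindex_inj (mulIg e)); apply: eq_bigl => d.
    by rewrite groupMr.
  have cy : y^-1 * to y e \in L.
    rewrite -phi0 ?groupM ?groupV // phiM ?groupV // eq1 -phiM ?groupV //.
    by rewrite mulVg phi1.
  have Ly := fixL e y Ee Ky cy.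
  by rewrite -phi_prod //; apply/eqP; rewrite phi0.
have ntE : E :!=: 1.
  by rewrite -cardG_gt1 oE -[X in (X < _)%N](expn0 p) ltn_exp2l ?prime_gt1.
have cardE1 : #|E^#| = (p ^ 2 - 1)%N.
  by have := cardsD1 1 E; rewrite group1 oE /= => ->; rewrite addKn.
pose cyc := fun d : aT => (<[d]> : {set aT}).
have orderp : forall d, d \in E^# -> #[d] = p.
  by move=> d; rewrite !inE => /andP[nd Ed]; apply: (abelem_order_p abE).
have eqset : forall f, f \in E^# -> forall d,
    ((d \in E^#) && (cyc d == cyc f)) = (d \in <[f]>^#).
  move=> f Ef d; rewrite /cyc.
  have Ef' : f \in E by move: Ef; rewrite !inE => /andP[].
  apply/andP/idP => [[Ed /eqP edf] | ].
    by rewrite !inE -edf cycle_id; move: Ed; rewrite !inE => /andP[->].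
  rewrite !inE => /andP[nd1 dF].
  have Ed : d \in E by apply: (subsetP _ d dF); rewrite cycle_subG.
  rewrite nd1 Ed /= eqEcard cycle_subG dF /= -!orderE orderp ?orderp //.
  by rewrite !inE nd1.
have m_eq : #|cyc @: E^#| = p.+1.
  have h : (\sum_(d in E^#) 1 = #|E^#|)%N := sum1_card _.
  rewrite (partition_big_imset cyc) /= in h.
  rewrite (eq_bigr (fun _ => p.-1)) in h; last first.
    move=> D /imsetP[f Ef ->]; rewrite (eq_bigl _ _ (eqset f Ef)) sum1_card.
    have := cardsD1 1 <[f]>; rewrite group1 -orderE orderp // add1n => ->.
    by rewrite succnK.
  rewrite sum_nat_const cardE1 in h.
  have p1 : (p.+1 * p.-1 = p ^ 2 - 1)%N.
    by rewrite -{2}(exp1n 2) subn_sqr mulnC subn1 addn1.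
  apply/eqP; rewrite -(eqn_pmul2r (_ : 0 < p.-1)%N) ?h ?p1 //.
  by rewrite -ltnS prednK ?prime_gt1 // prime_gt0.
have expL : forall x, x \in K -> x ^+ p \in L.
  move=> x Kx.
  have sumE := Zsum E (subxx E) ntE x Kx.
  rewrite (big_setD1 1%g) ?group1 //= (partition_big_imset cyc) /= in sumE.
  rewrite (eq_bigr (fun _ => - phi (to x 1%g))%R) in sumE; last first.
    move=> D /imsetP[f Ef ->]; rewrite (eq_bigl _ _ (eqset f Ef)).
    have Ef' : f \in E by move: Ef; rewrite !inE => /andP[].
    have ntf : <[f]> :!=: 1 by rewrite cycle_eq1; move: Ef; rewrite !inE => /andP[].
    have := Zsum <[f]>%G _ ntf x Kx; rewrite cycle_subG => /(_ Ef').
    rewrite (big_setD1 1%g) ?group1 //= => /eqP; rewrite addrC addr_eq0 => /eqP.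
    done.
  rewrite sumr_const m_eq act1 mulNrn mulrS opprD addrA addrN add0r in sumE.
  move/eqP: sumE; rewrite oppr_eq0 /phi -FiniteModule.fmodX ?KLin //.
  rewrite -morphX ?(subsetP nLK) // -/(phi (x ^+ p)) phi0 //.
  by rewrite groupX.
have [e0 Ee0 ne0] := trivgPn _ ntE.
have Ee0' : e0 \in E^# by rewrite !inE ne0.
have sCE : <[e0]> \subset E by rewrite cycle_subG.
have sCA : <[e0]> \subset A := subset_trans sCE sEA.
pose S := rcosets L K.
have nLb : forall b, b \in <[e0]> -> b \in 'N(L | to).
  by move=> b Bb; apply: (subsetP actsL); apply: (subsetP sCE).
have actsS : [acts <[e0]>, on S | to^*].
  apply: acts_by => // b C Bb /rcosetsP[x Kx ->].
  rewrite setact_rcoset ?(subsetP sCA) ?nLb ?(subsetP sKG) //.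
  apply/rcosetsP; exists (to x b) => //.
  by rewrite (acts_act actsK (subsetP sCE b Bb)).
have fixS : 'Fix_(S | to^*)(<[e0]>) = [set (L : {set gT})].
  apply/eqP; rewrite eqEsubset; apply/andP; split.
    apply/subsetP => C; rewrite inE => /andP[/rcosetsP[x Kx ->] /afixP fixC].
    have := fixC e0 (cycle_id e0).
    rewrite setact_rcoset ?(subsetP sCA) ?nLb ?cycle_id ?(subsetP sKG) // => eqC.
    have : to x e0 \in L :* x by rewrite -eqC rcoset_refl.
    rewrite mem_rcoset => h.
    have Lx : x \in L.
      apply: (fixL e0 x) => //.
      have -> : x^-1 * to x e0 = (to x e0 * x^-1) ^ x by rewrite conjgE !mulgA mulgKV.
      by rewrite memJ_norm ?(subsetP nLK).
    by rewrite rcoset_id // set11.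
  rewrite sub1set inE; apply/andP; split.
    by apply/rcosetsP; exists 1; rewrite ?group1 ?rcoset1.
  by apply/afixP => b Bb; apply: astabs_setact; apply: nLb.
have modS := pgroup_fix_mod (pgroupS sCE pE) actsS.
rewrite fixS cards1 in modS.
have p1 := prime_gt1 pr_p.
rewrite -indexg_eq1; apply/negPn/negP => n1.
have gt1 : (1 < #|K : L|)%N by rewrite ltn_neqAle eq_sym n1 indexg_gt0.
have pq := pdiv_prime gt1.
have qd : (pdiv #|K : L| %| #|K / L|)%N by rewrite card_quotient // pdiv_dvd.
have [u KLu ou] := Cauchy pq qd.
case/morphimP: KLu => x Nx Kx eu.
have : (pdiv #|K : L| %| p)%N.
  by rewrite -ou order_dvdn eu -morphX // /= coset_id // expL.
rewrite dvdn_prime2 // => /eqP qp.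
have := pdiv_dvd #|K : L|; rewrite qp /dvdn.
by rewrite /indexg modS modn_small.
Qed.

Theorem lemma3p1 (aT gT : finGroupType) (p : nat) (A : {group aT}) (G : {group gT})
    (to : groupAction A G) :
  prime p -> p.-abelem A -> (p ^ 3 <= #|A|)%N -> solvable G ->
  good_action to ->
  (forall a, a \in A^# -> abelian 'C_(G | to)[a]) ->
  abelian G.
Proof.
move=> pr_p abA oA solG good cabG.
have abAA : abelian A := abelem_abelian abA.
have pA := abelem_pgroup abA.
have p0 := prime_gt0 pr_p; have p1 := prime_gt1 pr_p.
have [A0 [sA0A _ oA0]] : exists A0 : {group aT},
    [/\ A0 \subset A, A0 <| A & #|A0| = (p ^ 3)%N].
  apply: normal_pgroup pA (normal_refl A) _.
  by rewrite -(leq_exp2l 3 _ p1) -(card_pgroup (abelem_pgroup abA)).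
have abA0 : p.-abelem A0 := abelemS sA0A abA.
have [E [sEA0 _ oE]] : exists E : {group aT},
    [/\ E \subset A0, E <| A0 & #|E| = (p ^ 2)%N].
  apply: (normal_pgroup (abelem_pgroup abA0) (normal_refl A0)).
  by rewrite oA0 pfactorK.
have A0A : forall x, x \in A0 -> x \in A := subsetP sA0A.
have A0s : forall x, x \in A0^# -> x \in A0 /\ x != 1.
  by move=> x; rewrite !inE => /andP[-> ->].
have actsG : forall B : {group aT}, B \subset A -> [acts B, on G | to].
  by move=> B sBA; rewrite astabs_range.
have genC : forall a, a \in A0^# -> exists Ea : {group aT},
    [/\ Ea \subset A0, <[a]> :&: Ea = 1 &
     'C_(G | to)[a] \subset <<\bigcup_(e in Ea^#) 'C_('C_(G | to)[a] | to)[e]>>].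
  move=> a /A0s[A0a na].
  have sa : <[a]> \subset A0 by rewrite cycle_subG.
  have /splitsP[Ea /complP[tiEa defA0]] := abelem_splits abA0 sa.
  have sEaA0 : Ea \subset A0 by rewrite -defA0 mulG_subr.
  have sEaA := subset_trans sEaA0 sA0A.
  have oEa : #|Ea| = (p ^ 2)%N.
    have := TI_cardMg tiEa; rewrite defA0 oA0 -orderE (abelem_order_p abA0 A0a na).
    by rewrite expnS => /eqP; rewrite eqn_pmul2l // => /eqP.
  exists Ea; split => //.
  have := gen_cent good abAA pr_p (abelemS sEaA0 abA0) oEa sEaA (K := ('C_(G | to)[a])%G); apply.
  - exact: subsetIl.
  - exact: cent_acts abAA sEaA (subxx G) (actsG _ sEaA) (A0A a A0a).
  - exact: solvableS (subsetIl _ _) solG.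
have JE : forall a e, a \in A -> e \in A -> <[a]> <*> <[e]> = <[a]> * <[e]>.
  move=> a e Aa Ae; apply: comm_joingE; apply: centC.
  by apply: (sub_abelian_cent2 abAA); rewrite cycle_subG.
have cardJ : forall a e, a \in A0^# -> e \in A0^# -> <[a]> :&: <[e]> = 1 ->
    #|<[a]> <*> <[e]>| = (p ^ 2)%N.
  move=> a e /A0s[A0a na] /A0s[A0e ne] ti.
  by rewrite JE ?A0A // TI_cardMg // -!orderE !(abelem_order_p abA0).
have sJ : forall a e, a \in A0 -> e \in A0 -> <[a]> <*> <[e]> \subset A0.
  by move=> a e ? ?; rewrite join_subG !cycle_subG; apply/andP.
have meet : forall a e b f, a \in A0^# -> e \in A0^# -> b \in A0^# -> f \in A0^# ->
    <[a]> :&: <[e]> = 1 -> <[b]> :&: <[f]> = 1 ->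
    exists2 g, g \in A0^# & (g \in <[a]> * <[e]>) && (g \in <[b]> * <[f]>).
  move=> a e b f Aa Ae Ab Af tiae tibf.
  have [A0a _] := A0s a Aa; have [A0e _] := A0s e Ae.
  have [A0b _] := A0s b Ab; have [A0f _] := A0s f Af.
  pose U := (<[a]> <*> <[e]>)%G; pose V := (<[b]> <*> <[f]>)%G.
  have gt1 : (1 < #|U :&: V|)%N.
    rewrite ltnNge; apply/negP => le1.
    have := mul_cardG U V; rewrite /U /V /= !cardJ // -expnD => h.
    have : (p ^ (2 + 2) <= p ^ 3)%N.
      rewrite h -[X in (_ <= X)%N]muln1 leq_mul // -oA0 subset_leq_card //.
      by rewrite mul_subG ?sJ.
    by rewrite leq_exp2l.
  have : (U :&: V)%G != 1 :> {set aT} by rewrite -cardG_gt1.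
  case/trivgPn => g UVg ng.
  move: UVg; rewrite /= inE => /andP[Ug Vg].
  exists g.
    by rewrite !inE ng (subsetP (sJ a e A0a A0e)).
  by rewrite -!JE ?A0A // Ug Vg.
have sub : forall x y g, x \in A -> y \in A -> g \in <[x]> * <[y]> ->
    'C_('C_(G | to)[x] | to)[y] \subset 'C_(G | to)[g].
  move=> x y g Ax Ay XYg.
  rewrite -setIA; apply: setIS.
  rewrite -(gacent_cycle to Ax) -(gacent_cycle to Ay) -gacentM ?cycle_subG //.
  by apply: gacentS; rewrite sub1set.
have key : forall a b, a \in A0^# -> b \in A0^# ->
    'C_(G | to)[a] \subset 'C('C_(G | to)[b]).
  move=> a b Aa Ab.
  have [Ea [sEa tiEa gena]] := genC a Aa.
  have [Eb [sEb tiEb genb]] := genC b Ab.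
  apply: subset_trans gena _; rewrite gen_subG; apply/bigcupsP => e Ee.
  rewrite centsC; apply: subset_trans genb _; rewrite gen_subG.
  apply/bigcupsP => f Ff.
  have Ee' : e \in Ea by move: Ee; rewrite !inE => /andP[].
  have Ff' : f \in Eb by move: Ff; rewrite !inE => /andP[].
  have Ee0 : e \in A0^# by move: Ee; rewrite !inE => /andP[-> /(subsetP sEa)].
  have Ff0 : f \in A0^# by move: Ff; rewrite !inE => /andP[-> /(subsetP sEb)].
  have tiae : <[a]> :&: <[e]> = 1.
    by apply/trivgP; rewrite -tiEa setIS // cycle_subG.
  have tibf : <[b]> :&: <[f]> = 1.
    by apply/trivgP; rewrite -tiEb setIS // cycle_subG.
  have [g Ag /andP[Ug Vg]] := meet a e b f Aa Ee0 Ab Ff0 tiae tibf.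
  have Ag' : g \in A^# by move: Ag; rewrite !inE => /andP[-> /A0A].
  have [A0a _] := A0s a Aa; have [A0e _] := A0s e Ee0.
  have [A0b _] := A0s b Ab; have [A0f _] := A0s f Ff0.
  apply: (sub_abelian_cent2 (cabG g Ag')).
    exact: sub (A0A b A0b) (A0A f A0f) Vg.
  exact: sub (A0A a A0a) (A0A e A0e) Ug.
have sEA := subset_trans sEA0 sA0A.
have genG := gen_cent good abAA pr_p (abelemS sEA0 abA0) oE sEA (K := G)
  (subxx G) (actsG _ sEA) solG.
apply: abelianS genG _; rewrite abelian_gen /abelian.
apply/bigcupsP => e Ee; rewrite centsC; apply/bigcupsP => f Ff.
have E0 : forall x, x \in E^# -> x \in A0^#.
  by move=> x; rewrite !inE => /andP[-> /(subsetP sEA0)].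
by apply: key; apply: E0.
Qed.
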